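(* Let $\mathcal{A}$ be an integral domain with field of fractions $\mathcal{F}$, let $\mathcal{Z}\subsetneq\mathcal{A}$ be a prime ideal, and let $\mathcal{P}=\{n/d\mid n\in\mathcal{A},\ d\in\mathcal{A}\setminus\mathcal{Z}\}$ be the set of causal transfer functions. Suppose there exist $a,b,a',b'\in\mathcal{A}$ with $a'\neq 0$ such that: (i) $ab=a'b'$; (ii) the ratio $a/a'$ belongs to $\mathcal{P}$ (i.e. is a causal transfer function) and does not have a coprime factorization over $\mathcal{A}$; (iii) the pair $(a,b)$ is coprime over $\mathcal{A}$, i.e. there exist $x,y\in\mathcal{A}$ with $xa+yb=1$. Then there exists a causal stabilizable plant $P$ which has neither a right-coprime factorization nor a left-coprime factorization over $\mathcal{A}$.
   Context: Setting: $\mathcal{A}$ is the ring of stable causal transfer functions, $\mathcal{F}$ its field of fractions (all possible transfer functions), and causality is defined via the prime ideal $\mathcal{Z}$: a plant (a matrix) is causal if all its entries lie in $\mathcal{P}$. For a plant $P$ (an $n\times m$ matrix over $\mathcal{F}$) and a controller $C$ (an $m\times n$ matrix over $\mathcal{F}$) with $\det(I_n+PC)\neq0$, the closed-loop matrix is $H(P,C)=\begin{pmatrix}(I_n+PC)^{-1} & -P(I_m+CP)^{-1}\\ C(I_n+PC)^{-1} & (I_m+CP)^{-1}\end{pmatrix}$; the closed loop is stable if $H(P,C)$ has all entries in $\mathcal{A}$, and $P$ is stabilizable if some such $C$ exists. A right-coprime factorization of $P$ over $\mathcal{A}$ is $P=ND^{-1}$ with $N,D$ matrices over $\mathcal{A}$,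 $\det D\neq0$, such that $YN+XD=I$ for some matrices $X,Y$ over $\mathcal{A}$; a left-coprime factorization is $P=\tilde D^{-1}\tilde N$ with $\tilde N,\tilde D$ over $\mathcal{A}$, $\det\tilde D\neq0$, and $\tilde N\tilde Y+\tilde D\tilde X=I$ for some $\tilde X,\tilde Y$ over $\mathcal{A}$. For a scalar $p\in\mathcal{F}$ a coprime factorization is $p=n/d$ with $n,d\in\mathcal{A}$, $d\neq0$, and $xn+yd=1$ for some $x,y\in\mathcal{A}$. *)

(* Defs.v *)
From HB Require Import structures.
From mathcomp Require Import all_boot all_order all_algebra fraction.
Set Implicit Arguments. Unset Strict Implicit. Unset Printing Implicit Defensive.
Import GRing.Theory.
Local Open Scope ring_scope.

Definition emb (A : idomainType) : A -> {fraction A} := @FracField.tofrac A.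

Definition prime_ideal (A : idomainType) (Z : A -> Prop) : Prop :=
  [/\ Z 0,
      (forall x y, Z x -> Z y -> Z (x + y)),
      (forall r x, Z x -> Z (r * x)),
      ~ Z 1 &
      (forall x y, Z (x * y) -> Z x \/ Z y)].

Definition causal (A : idomainType) (Z : A -> Prop) (p : {fraction A}) : Prop :=
  exists n d : A, ~ Z d /\ p = emb n / emb d.

Definition inA (A : idomainType) (p : {fraction A}) : Prop :=
  exists a : A, p = emb a.

Definition mx_causal (A : idomainType) (Z : A -> Prop) n m
  (P : 'M[{fraction A}]_(n, m)) : Prop :=
  forall i j, causal Z (P i j).

Definition mx_inA (A : idomainType) n m (M : 'M[{fraction A}]_(n, m)) : Prop :=
  forall i j, inA (M i j).

Definition closed_loop (A : idomainType) n m
  (P : 'M[{fraction A}]_(n, m)) (C : 'M[{fraction A}]_(m, n))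
  : 'M[{fraction A}]_(n + m, n + m) :=
  block_mx (invmx (1%:M + P *m C))   (- (P *m invmx (1%:M + C *m P)))
           (C *m invmx (1%:M + P *m C)) (invmx (1%:M + C *m P)).

Definition stabilizable (A : idomainType) n m (P : 'M[{fraction A}]_(n, m)) : Prop :=
  exists C : 'M[{fraction A}]_(m, n),
    \det (1%:M + P *m C) != 0 /\ mx_inA (closed_loop P C).

Definition has_rcf (A : idomainType) n m (P : 'M[{fraction A}]_(n, m)) : Prop :=
  exists (N : 'M[A]_(n, m)) (D : 'M[A]_m),
    [/\ \det D != 0,
        P = map_mx (@emb A) N *m invmx (map_mx (@emb A) D) &
        exists (X : 'M[A]_m) (Y : 'M[A]_(m, n)), Y *m N + X *m D = 1%:M].

Definition has_lcf (A : idomainType) n m (P : 'M[{fraction A}]_(n, m)) : Prop :=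
  exists (Nt : 'M[A]_(n, m)) (Dt : 'M[A]_n),
    [/\ \det Dt != 0,
        P = invmx (map_mx (@emb A) Dt) *m map_mx (@emb A) Nt &
        exists (Xt : 'M[A]_n) (Yt : 'M[A]_(m, n)), Nt *m Yt + Dt *m Xt = 1%:M].

Definition has_cf (A : idomainType) (p : {fraction A}) : Prop :=
  exists n d : A, [/\ d != 0, p = emb n / emb d &
    exists x y : A, x * n + y * d = 1].

(* Main.v *)
Require Import Defs.
From HB Require Import structures.
From mathcomp Require Import all_boot all_order all_algebra fraction.
From mathcomp Require Import ring.
Import GRing.Theory.
Local Open Scope ring_scope.

Lemma scal11 (R : comUnitRingType) (M : 'M[R]_1) (i j : 'I_1) : M i j = M 0 0.
Proof. by rewrite !ord1. Qed.

Lemma scalar_mxD' (R : comUnitRingType) n (u v : R) :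
  u%:M + v%:M = (u + v)%:M :> 'M_n.
Proof. by apply/matrixP => i j; rewrite !mxE mulrnDl. Qed.

Lemma rcf_cf (A : idomainType) (p : {fraction A}) :
  has_rcf (p%:M : 'M_1) -> has_cf p.
Proof.
case=> N [D [dD eP [X [Y eq1]]]].
exists (N 0 0), (D 0 0); split.
- by rewrite -det_mx11.
- have := congr1 (fun M : 'M_1 => M 0 0) eP.
  rewrite /= [map_mx _ D]mx11_scalar invmx_scalar mxE eqxx mulr1n => ->.
  by rewrite mxE big_ord1 !mxE eqxx mulr1n.
- exists (Y 0 0), (X 0 0).
  have := congr1 (fun M : 'M_1 => M 0 0) eq1.
  by rewrite /= !mxE !big_ord1 eqxx mulr1n.
Qed.

Lemma lcf_cf (A : idomainType) (p : {fraction A}) :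
  has_lcf (p%:M : 'M_1) -> has_cf p.
Proof.
case=> N [D [dD eP [X [Y eq1]]]].
exists (N 0 0), (D 0 0); split.
- by rewrite -det_mx11.
- have := congr1 (fun M : 'M_1 => M 0 0) eP.
  rewrite /= [map_mx _ D]mx11_scalar invmx_scalar mxE eqxx mulr1n => ->.
  by rewrite mxE big_ord1 !mxE eqxx mulr1n mulrC.
- exists (Y 0 0), (X 0 0).
  have := congr1 (fun M : 'M_1 => M 0 0) eq1.
  by rewrite /= !mxE !big_ord1 eqxx mulr1n mulrC [X 0 0 * _]mulrC.
Qed.

Theorem proposition1 (A : idomainType) (Z : A -> Prop) (a b a' b' : A) :
  prime_ideal Z ->
  a' != 0 ->
  a * b = a' * b' ->
  causal Z (emb a / emb a') ->
  ~ has_cf (emb a / emb a') ->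
  (exists x y : A, x * a + y * b = 1) ->
  exists (n m : nat) (P : 'M[{fraction A}]_(n, m)),
    [/\ mx_causal Z P, stabilizable P, ~ has_rcf P & ~ has_lcf P].
Proof.
move=> _ a'0 eab cp ncf [x [y exy]].
set p := emb a / emb a'.
have a0 : a != 0.
  apply/negP => /eqP a0; apply: ncf; exists 0, 1; split.
  - exact: oner_neq0.
  - by rewrite /p a0 /emb tofrac0 !mul0r.
  - by exists 0, 1; rewrite mul0r add0r mulr1.
have yb0 : y * b != 0.
  apply/negP => /eqP yb0; apply: ncf; exists a, a'; split => //.
  by exists x, 0; rewrite mul0r addr0 -exy yb0 addr0.
have ea : emb a != 0 by rewrite /emb tofrac_eq0.
have ea' : emb a' != 0 by rewrite /emb tofrac_eq0.
have eyb : emb (y * b) != 0 by rewrite /emb tofrac_eq0.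
set c := ((emb (y * b))^-1 - 1) / p.
have p0 : p != 0 by rewrite /p mulf_neq0 ?invr_eq0.
have e1 : 1 + p * c = (emb (y * b))^-1.
  by rewrite /c mulrC -mulrA mulVf // mulr1 addrC subrK.
have e1' : 1 + c * p = (emb (y * b))^-1 by rewrite mulrC.
have Hb : emb a * emb b = emb a' * emb b' by rewrite /emb -!rmorphM /= eab.
have Hb' : emb b' = emb a * emb b / emb a' by rewrite Hb mulrAC divff // mul1r.
have Hx : emb x * emb a + emb y * emb b = 1.
  by rewrite /emb -!rmorphM -rmorphD /= exy rmorph1.
exists 1%N, 1%N, p%:M; split.
- by move=> i j; rewrite !ord1 mxE eqxx mulr1n.
- exists c%:M; split.
    by rewrite -scalar_mxM scalar_mxD' det_scalar1 e1 invr_eq0.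
  have HH : (1%:M + p%:M *m c%:M : 'M_1) = ((emb (y * b))^-1)%:M.
    by rewrite -scalar_mxM scalar_mxD' e1.
  have HH' : (1%:M + c%:M *m p%:M : 'M_1) = ((emb (y * b))^-1)%:M.
    by rewrite -scalar_mxM scalar_mxD' e1'.
  rewrite /closed_loop HH HH' invmx_scalar invrK.
  move=> i j.
  case: (split_ordP i) => i' ->{i}; case: (split_ordP j) => j' ->{j};
    rewrite ?block_mxEul ?block_mxEur ?block_mxEdl ?block_mxEdr ?mxE
       ?big_ord1 ?mxE !ord1 ?eqxx ?mulr1n.
  + by exists (y * b).
  + exists (- (y * b')).
    rewrite /emb rmorphN !rmorphM /=; congr (- _).
    move: Hb' ea'; rewrite /p /emb => ->.
    move: (tofrac a) (tofrac a') (tofrac b) (tofrac y) => u v w z Ha'.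
    by rewrite [LHS]mulrCA [X in z * X]mulrAC.
  + exists (x * a').
    rewrite /c mulrAC mulrBl mulVf // mul1r.
    have E : 1 - emb (y * b) = emb x * emb a.
      by rewrite -Hx /emb rmorphM /= addrK.
    rewrite E /p /emb rmorphM /=.
    move: ea ea'; rewrite /emb.
    move: (tofrac a) (tofrac a') (tofrac x) => u v w Ha Ha'.
    by rewrite invf_div -mulrA [u * _]mulrCA divff // mulr1.
  + by exists (y * b).
- by move/rcf_cf.
- by move/lcf_cf.
Qed.
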